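(* Let $n\ge 2$ and let $\mathcal{A}(L_n)=\{(x,y)\in L_n\times L_n: y\le x\}\setminus\{(0,0)\}$, ordered componentwise. Then $\operatorname{Der}(L_n)$ with pointwise order is a lattice (with pointwise $\vee$ and $\wedge$), and the map $(x,y)\mapsto (d_x)^y$ is a lattice isomorphism from $\mathcal{A}(L_n)$ onto $\operatorname{Der}(L_n)$, where $(d_x)^y(1)=y$ and $(d_x)^y(z)=x\odot z$ for $z\ne 1$.
   Context: An MV-algebra is an algebra $(A,\oplus,{}^*,0)$ of type $(2,1,0)$ satisfying the usual axioms; $1=0^*$, $x\odot y=(x^*\oplus y^* )^*$, natural order $x\le y$ iff $x^*\oplus y=1$, $x\vee y=(x\odot y^* )\oplus y$, $x\wedge y=x\odot(x^*\oplus y)$. A $(\odot,\vee)$-derivation on $A$ is a map $d:A\to A$ with $d(x\odot y)=(d(x)\odot y)\vee(x\odot d(y))$ for all $x,y\in A$; $\operatorname{Der}(A)$ is the set of these, ordered by $d\preceq d'$ iff $d(x)\le d'(x)$ for all $x$. $L_n=\{0,\frac1{n-1},\dots,\frac{n-2}{n-1},1\}$ with $x\oplus y=\min\{1,x+y\}$, $x^*=1-x$, $x\odot y=\max\{0,x+y-1\}$. *)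

(* Defs.v *)
From mathcomp Require Import all_boot.
Unset Printing Implicit Defensive.

(* The MV-chain L_n = {0, 1/(n-1), ..., (n-2)/(n-1), 1}, encoded by numerators:
   the element k/(n-1) is represented by the ordinal k : 'I_(n.-1).+1. *)
Definition Ln (n : nat) := 'I_(n.-1).+1.

Section MV.
Variable n : nat.
Local Notation m := n.-1.

Definition mv_zero : Ln n := ord0.
Definition mv_one : Ln n := ord_max.
Definition mv_oplus (x y : Ln n) : Ln n := inord (minn (x + y) m).
Definition mv_neg (x : Ln n) : Ln n := inord (m - x).
Definition mv_odot (x y : Ln n) : Ln n := mv_neg (mv_oplus (mv_neg x) (mv_neg y)).
Definition mv_le (x y : Ln n) : Prop := mv_oplus (mv_neg x) y = mv_one.
Definition mv_join (x y : Ln n) : Ln n := mv_oplus (mv_odot x (mv_neg y)) y.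
Definition mv_meet (x y : Ln n) : Ln n := mv_odot x (mv_oplus (mv_neg x) y).

Definition is_der (d : Ln n -> Ln n) : Prop :=
  forall x y, d (mv_odot x y) = mv_join (mv_odot (d x) y) (mv_odot x (d y)).

Definition der_le (d d' : Ln n -> Ln n) : Prop := forall x, mv_le (d x) (d' x).

Definition inA (p : Ln n * Ln n) : Prop :=
  mv_le p.2 p.1 /\ p <> (mv_zero, mv_zero).
Definition pair_le (p q : Ln n * Ln n) : Prop := mv_le p.1 q.1 /\ mv_le p.2 q.2.
Definition pair_join (p q : Ln n * Ln n) : Ln n * Ln n :=
  (mv_join p.1 q.1, mv_join p.2 q.2).
Definition pair_meet (p q : Ln n * Ln n) : Ln n * Ln n :=
  (mv_meet p.1 q.1, mv_meet p.2 q.2).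

Definition dxy (p : Ln n * Ln n) : Ln n -> Ln n :=
  fun z => if z == mv_one then p.2 else mv_odot p.1 z.

Definition pjoin (d1 d2 : Ln n -> Ln n) : Ln n -> Ln n := fun z => mv_join (d1 z) (d2 z).
Definition pmeet (d1 d2 : Ln n -> Ln n) : Ln n -> Ln n := fun z => mv_meet (d1 z) (d2 z).
End MV.

(* Main.v *)
Require Import Defs.
From mathcomp Require Import all_boot zify.
Set Implicit Arguments.

Section L1.
Variable n : nat.
Local Notation m := n.-1.
Implicit Types x y z : 'I_m.+1.

Lemma zeroE : nat_of_ord (mv_zero n) = 0. Proof. by []. Qed.
Lemma oneE : nat_of_ord (mv_one n) = m. Proof. by []. Qed.
Lemma negE x : nat_of_ord (mv_neg n x) = m - x.
Proof. rewrite /mv_neg inordK //; lia. Qed.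
Lemma oplusE x y : nat_of_ord (mv_oplus n x y) = minn (x + y) m.
Proof. rewrite /mv_oplus inordK //; lia. Qed.
Lemma odotE x y : nat_of_ord (mv_odot n x y) = x + y - m.
Proof. have := ltn_ord x; have := ltn_ord y.
rewrite /mv_odot negE oplusE !negE; lia. Qed.
Lemma joinE x y : nat_of_ord (mv_join n x y) = maxn x y.
Proof. have := ltn_ord x; have := ltn_ord y.
rewrite /mv_join oplusE odotE negE; lia. Qed.
Lemma meetE x y : nat_of_ord (mv_meet n x y) = minn x y.
Proof. have := ltn_ord x; have := ltn_ord y.
rewrite /mv_meet odotE oplusE negE; lia. Qed.
Lemma leE x y : mv_le n x y <-> x <= y.
Proof. have := ltn_ord x; have := ltn_ord y.
rewrite /mv_le; split.
- move/(congr1 val)=> /=; rewrite oplusE negE ?oneE; lia.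
- move=> h; apply: val_inj; rewrite /= oplusE negE ?oneE; lia. Qed.
Lemma ordE x y : x = y <-> nat_of_ord x = nat_of_ord y.
Proof. split; [by move->| exact: val_inj]. Qed.
Lemma dxyE (p : Ln n * Ln n) z : nat_of_ord (dxy n p z) =
  if nat_of_ord z == m then nat_of_ord p.2 else p.1 + z - m.
Proof. rewrite /dxy. case: eqP => [->|h]; first by rewrite eqxx.
case: eqP => [h'|]; last by rewrite odotE.
by case: h; apply: val_inj. Qed.
End L1.

Section L2.
Variable n : nat.
Local Notation m := n.-1.
Implicit Types x y z : 'I_m.+1.

Lemma der_dxy (p : Ln n * Ln n) : (nat_of_ord p.2 <= p.1) -> is_der n (dxy n p).
Proof.
case: p => a b /= hab x y; apply/ordE.
have := ltn_ord x; have := ltn_ord y; have := ltn_ord a; have := ltn_ord b.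
rewrite joinE !odotE !dxyE /= odotE.
do ! case: eqP => /= ?; lia.
Qed.

Lemma der_class (d : Ln n -> Ln n) : 1 <= m -> is_der n d ->
  exists2 p : Ln n * Ln n, (nat_of_ord p.2 <= p.1) /\ 1 <= p.1 & forall z, d z = dxy n p z.
Proof.
move=> hm hd.
pose c : 'I_m.+1 := inord m.-1.
have cE : nat_of_ord c = m.-1 by rewrite inordK //; lia.
have d0 : nat_of_ord (d (mv_zero n)) = 0.
  have := hd (mv_zero n) (mv_zero n).
  have -> : mv_odot n (mv_zero n) (mv_zero n) = mv_zero n.
    by apply/ordE; rewrite odotE.
  move/(congr1 (@nat_of_ord _)); rewrite joinE !odotE zeroE.
  have := ltn_ord (d (mv_zero n)); lia.
pose e := nat_of_ord (d c).
have key : forall j, 1 <= j <= m -> nat_of_ord (d (inord (m - j))) = e.+1 - j.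
  elim=> [|j IH] hj; first lia.
  case: (j =P 0) => [->|j0].
    by rewrite !subn1.
  have -> : (inord (m - j.+1) : Ln n) = mv_odot n (inord (m - j)) c.
    apply/ordE; rewrite odotE cE !inordK; lia.
  rewrite hd joinE !odotE IH ?cE ?inordK; lia.
have he : e <= m.-1.
  have := key m; rewrite subnn.
  have -> : (inord 0 : Ln n) = mv_zero n by apply/ordE; rewrite inordK.
  rewrite d0; lia.
have hf : nat_of_ord (d (mv_one n)) <= e.+1.
  have := hd (mv_one n) c.
  have -> : mv_odot n (mv_one n) c = c by apply/ordE; rewrite odotE oneE cE; lia.
  move/(congr1 (@nat_of_ord _)); rewrite joinE !odotE oneE cE -/e; lia.
exists (inord e.+1, d (mv_one n)).
  rewrite /= inordK; lia.
move=> z; apply/ordE; rewrite dxyE /=.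
have := ltn_ord z; case: eqP => hz hzm.
  by congr (nat_of_ord (d _)); apply/ordE.
have -> : z = inord (m - (m - z)) by apply/ordE; rewrite inordK; lia.
rewrite key ?inordK; lia.
Qed.
End L2.

Section L3.
Variable n : nat.
Local Notation m := n.-1.

Lemma inA_iff (p : Ln n * Ln n) : inA n p <-> nat_of_ord p.2 <= p.1 /\ 1 <= p.1.
Proof.
case: p => a b; rewrite /inA leE /=; split.
- case=> h1 h2; split=> //; case: (posnP a) => ha; last by [].
  case: h2; congr pair; apply/ordE => //=; lia.
- case=> h1 h2; split=> // [[ha _]]; move: h2; rewrite ha.
  by [].
Qed.

Lemma der_ext (d d' : Ln n -> Ln n) : (forall z, d z = d' z) -> is_der n d' -> is_der n d.
Proof. by move=> h hd x y; rewrite !h; apply: hd. Qed.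

Lemma pjoin_dxy p q z : pjoin n (dxy n p) (dxy n q) z = dxy n (pair_join n p q) z.
Proof. apply/ordE; rewrite /pjoin joinE !dxyE /= !joinE; case: eqP => _ //; lia. Qed.
Lemma pmeet_dxy p q z : pmeet n (dxy n p) (dxy n q) z = dxy n (pair_meet n p q) z.
Proof. apply/ordE; rewrite /pmeet meetE !dxyE /= !meetE; case: eqP => _ //; lia. Qed.

Lemma pjoin_ext d1 d2 p q : (forall z, d1 z = dxy n p z) -> (forall z, d2 z = dxy n q z) ->
  forall z, pjoin n d1 d2 z = dxy n (pair_join n p q) z.
Proof. by move=> h1 h2 z; rewrite -pjoin_dxy /pjoin h1 h2. Qed.
Lemma pmeet_ext d1 d2 p q : (forall z, d1 z = dxy n p z) -> (forall z, d2 z = dxy n q z) ->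
  forall z, pmeet n d1 d2 z = dxy n (pair_meet n p q) z.
Proof. by move=> h1 h2 z; rewrite -pmeet_dxy /pmeet h1 h2. Qed.

Lemma inA_join p q : inA n p -> inA n q -> inA n (pair_join n p q).
Proof. rewrite !inA_iff /= !joinE; lia. Qed.
Lemma inA_meet p q : inA n p -> inA n q -> inA n (pair_meet n p q).
Proof. rewrite !inA_iff /= !meetE; lia. Qed.

End L3.

Theorem theorem5p6 (n : nat) (hn : 2 <= n) :
  (forall d1 d2 : Ln n -> Ln n, is_der n d1 -> is_der n d2 ->
     [/\ is_der n (pjoin n d1 d2) /\ is_der n (pmeet n d1 d2),
         der_le n d1 (pjoin n d1 d2) /\ der_le n d2 (pjoin n d1 d2),
         der_le n (pmeet n d1 d2) d1 /\ der_le n (pmeet n d1 d2) d2,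
         (forall d, is_der n d -> der_le n d1 d -> der_le n d2 d ->
            der_le n (pjoin n d1 d2) d) &
         (forall d, is_der n d -> der_le n d d1 -> der_le n d d2 ->
            der_le n d (pmeet n d1 d2))]) /\
  (forall p, inA n p -> is_der n (dxy n p)) /\
  (forall p q, inA n p -> inA n q -> (forall z, dxy n p z = dxy n q z) -> p = q) /\
  (forall d, is_der n d -> exists2 p, inA n p & forall z, d z = dxy n p z) /\
  (forall p q, inA n p -> inA n q -> (pair_le n p q <-> der_le n (dxy n p) (dxy n q))) /\
  (forall p q, inA n p -> inA n q ->
     [/\ inA n (pair_join n p q), inA n (pair_meet n p q),
         (forall z, dxy n (pair_join n p q) z = pjoin n (dxy n p) (dxy n q) z) &
         (forall z, dxy n (pair_meet n p q) z = pmeet n (dxy n p) (dxy n q) z)]).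
Proof.
have hm : 1 <= n.-1 by lia.
have cls : forall d, is_der n d -> exists2 p, inA n p & forall z, d z = dxy n p z.
  move=> d hd; case: (der_class hm hd) => p hp hz; exists p => //; exact/inA_iff.
pose c : 'I_(n.-1).+1 := inord (n.-1).-1.
have cE : nat_of_ord c = (n.-1).-1 by rewrite inordK //; lia.
split.
  move=> d1 d2 h1 h2.
  case: (cls _ h1) => p hp e1; case: (cls _ h2) => q hq e2.
  split.
  - split; apply: der_ext.
    + exact: pjoin_ext e1 e2.
    + apply: der_dxy; move: (inA_join hp hq); rewrite inA_iff; by case.
    + exact: pmeet_ext e1 e2.
    + apply: der_dxy; move: (inA_meet hp hq); rewrite inA_iff; by case.
  - by split=> z; rewrite leE /pjoin joinE; lia.
  - by split=> z; rewrite leE /pmeet meetE; lia.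
  - move=> d _ l1 l2 z; move: (l1 z) (l2 z); rewrite !leE /pjoin joinE; lia.
  - move=> d _ l1 l2 z; move: (l1 z) (l2 z); rewrite !leE /pmeet meetE; lia.
split.
  move=> p; rewrite inA_iff => -[h _]; exact: der_dxy.
split.
  move=> [a b] [a' b']; rewrite !inA_iff /= => hp hq h.
  move: (congr1 (@nat_of_ord _) (h (mv_one n))) (congr1 (@nat_of_ord _) (h c)).
  rewrite !dxyE /= cE !eqxx; case: eqP => [?|_]; first lia.
  move=> e1 e2; congr pair; apply/ordE => //; lia.
split; first exact: cls.
split.
  move=> [a b] [a' b']; rewrite !inA_iff /pair_le /der_le /= !leE => hp hq; split.
  - by case=> h1 h2 z; rewrite leE !dxyE /=; case: eqP => _ //; lia.
  - move=> h; move: (h (mv_one n)) (h c); rewrite !leE !dxyE /= cE !eqxx.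
    case: eqP => [?|_]; first lia. lia.
move=> p q hp hq; split.
- exact: inA_join.
- exact: inA_meet.
- by move=> z; rewrite pjoin_dxy.
- by move=> z; rewrite pmeet_dxy.
Qed.
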